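(* Let $(X,\mathcal{F})$ be the game hypergraph constructed from a 3SAT formula $\varphi$ as described in the context, and consider the strict Avoider-Enforcer game on it in which Enforcer moves first. Whenever Enforcer claims a vertex in some box, Avoider has to claim a vertex in the same box in her reply: precisely, if in some round Enforcer claims a vertex of box $B_i$ and Avoider's immediate reply is a vertex outside $B_i$, then from that position Enforcer has a strategy that wins the game.
   Context: A (strict) Avoider-Enforcer game is given by a finite board $X$ and a family $\mathcal{F}$ of losing sets; Avoider and Enforcer alternately claim one unclaimed element of $X$ per move until all of $X$ is claimed; Enforcer wins iff Avoider has claimed all elements of some $f\in\mathcal{F}$. Construction from a 3SAT formula $\varphi$ on variables $x_1,\dots,x_n$ (each clause having exactly three literals on three distinct variables): the board is $X=\bigcup_{i=1}^n\{a_i,s_i,x_i,\overline{x_i}\}$, consisting of $4n$ distinct vertices; the set $B_i=\{a_i,s_i,x_i,\overline{x_i}\}$ is called box $i$. The vertices $x_i,\overline{x_i}$ are identified with the literals $x_i,\overline{x_i}$ of $\varphi$. The family $\mathcal{F}$ consists of (1) for each $i$, all four 3-element subsets of $B_i$; and (2) for each clause $C=\ell_i\lor\ell_j\lor\ell_k$ of $\varphi$, where $\ell_h\in\{x_h,\overline{x_h}\}$ for $h=i,j,k$, the set $L_C=\{s_i,s_j,s_k,\overline{\ell_i},\overline{\ell_j},\overline{\ell_k}\}$, where $\overline{\ell}$ denotes the negation of literal $\ell$ (with $\overline{\overline{x_h}}=x_h$). *)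

(* Defs.v *)
From mathcomp Require Import all_boot.
Set Implicit Arguments. Unset Strict Implicit. Unset Printing Implicit Defensive.

(* Vertices of the board: box index i : 'I_n and a kind in 'I_4:
   kind 0 = a_i, kind 1 = s_i, kind 2 = x_i, kind 3 = \overline{x_i}. *)
Definition vertex (n : nat) := ('I_n * 'I_4)%type.

Definition kA : 'I_4 := @Ordinal 4 0 isT.
Definition kS : 'I_4 := @Ordinal 4 1 isT.
Definition kX : 'I_4 := @Ordinal 4 2 isT.
Definition kXbar : 'I_4 := @Ordinal 4 3 isT.

Definition box_of {n} (v : vertex n) : 'I_n := v.1.

Definition box {n} (i : 'I_n) : {set vertex n} := [set v | v.1 == i].

Definition s_vert {n} (i : 'I_n) : vertex n := (i, kS).

(* A literal is a variable together with a polarity: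
   (h, true) is x_h, (h, false) is \overline{x_h}. *)
Definition literal (n : nat) := ('I_n * bool)%type.
Definition lit_var {n} (l : literal n) : 'I_n := l.1.
Definition lit_neg {n} (l : literal n) : literal n := (l.1, ~~ l.2).
Definition lit_vert {n} (l : literal n) : vertex n :=
  (l.1, if l.2 then kX else kXbar).

Definition clause (n : nat) := (literal n * literal n * literal n)%type.
Definition cl1 {n} (C : clause n) := C.1.1.
Definition cl2 {n} (C : clause n) := C.1.2.
Definition cl3 {n} (C : clause n) := C.2.

Definition wf_clause {n} (C : clause n) : bool :=
  [&& lit_var (cl1 C) != lit_var (cl2 C),
      lit_var (cl1 C) != lit_var (cl3 C) &
      lit_var (cl2 C) != lit_var (cl3 C)].

Definition wf_formula {n} (phi : seq (clause n)) : bool := all wf_clause phi.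

Definition clause_set {n} (C : clause n) : {set vertex n} :=
  [set s_vert (lit_var (cl1 C)); s_vert (lit_var (cl2 C)); s_vert (lit_var (cl3 C));
       lit_vert (lit_neg (cl1 C)); lit_vert (lit_neg (cl2 C));
       lit_vert (lit_neg (cl3 C))].

Definition game_family {n} (phi : seq (clause n)) : {set {set vertex n}} :=
  [set f : {set vertex n} |
     [exists i : 'I_n, (f \subset box i) && (#|f| == 3)]
     || (f \in [seq clause_set C | C <- phi])].

(* Strict Avoider-Enforcer game, Enforcer moving first.  A position is the
   pair (A, E) of sets claimed by Avoider and Enforcer.  Since Enforcer moves
   first, it is Enforcer's turn iff #|E| = #|A|.
   [ewins F A E] : Enforcer has a strategy winning the game from (A, E)
   (inductively: the finite game tree admits a winning strategy). *)
Inductive ewins {T : finType} (F : {set {set T}}) : {set T} -> {set T} -> Prop :=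
| ewins_end (A E : {set T}) :
    (forall v, v \in A :|: E) ->
    (exists2 f, f \in F & f \subset A) ->
    ewins F A E
| ewins_enforcer (A E : {set T}) (v : T) :
    #|E| = #|A| ->
    v \notin A :|: E ->
    ewins F A (v |: E) ->
    ewins F A E
| ewins_avoider (A E : {set T}) :
    #|A| < #|E| ->
    (exists v, v \notin A :|: E) ->
    (forall v, v \notin A :|: E -> ewins F (v |: A) E) ->
    ewins F A E.

(* Main.v *)
Require Import Defs.
From mathcomp Require Import all_boot zify.
Section Key.
Variables (T : finType) (F : {set {set T}}) (J : {set T}) (m : nat).
Hypothesis HT : #|T| = 2 * m.
Hypothesis HJ : #|J| = 4.
Hypothesis HF : forall S : {set T}, S \subset J -> #|S| = 3 -> S \in F.

Lemma cardU0 (A E : {set T}) : A :&: E = set0 -> #|A :|: E| = #|A| + #|E|.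
Proof. by move=> h; rewrite cardsU h cards0 subn0. Qed.

Lemma key k : forall A E, #|~: (A :|: E)| = k -> A :&: E = set0 ->
  (#|E| = #|A| \/ #|E| = #|A|.+1) -> #|E :&: J| < #|A :&: J| -> ewins F A E.
Proof.
elim: k => [|k IH] A E Hk H0 Hturn Hd.
all: have Hdis : forall u, ~~ ((u \in A) && (u \in E)) by move=> u; move/setP: H0 => /(_ u); rewrite !inE => ->.
- have full : forall v, v \in A :|: E.
    move=> v; apply/negPn; rewrite -in_setC.
    by move/cards0_eq: Hk => ->; rewrite inE.
  apply: ewins_end => //.
  have HS : #|A :&: J| + #|E :&: J| = 4.
    rewrite -HJ -cardU0; last first.
      apply/setP => v; rewrite !inE; have := Hdis v.
      by case: (v \in A); case: (v \in E); case: (v \in J).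
    apply: eq_card => v; rewrite !inE.
    by have := full v; rewrite inE; case: (v \in A); case: (v \in E); case: (v \in J).
  have SJ : A :&: J \subset J by apply: subsetIr.
  have SA : A :&: J \subset A by apply: subsetIl.
  have [x Hx] : exists x, x \in A :&: J.
    by apply/set0Pn; rewrite -card_gt0; lia.
  case: (boolP (#|A :&: J| == 3)) => [/eqP h3|h3].
  + by exists (A :&: J) => //; apply: HF.
  + exists (A :&: J :\ x).
    * apply: HF; first by apply: subset_trans (subD1set (A :&: J) x) SJ.
      have := cardsD1 x (A :&: J); rewrite Hx /=; move/eqP: h3; lia.
    * by apply: subset_trans (subD1set (A :&: J) x) SA.
- have [v Hv] : exists v, v \in ~: (A :|: E).
    by apply/set0Pn; rewrite -card_gt0 Hk.
  have HvAE : v \notin A :|: E by move: Hv; rewrite inE.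
  have HvA : v \notin A by move: HvAE; rewrite inE negb_or => /andP[].
  have HvE : v \notin E by move: HvAE; rewrite inE negb_or => /andP[].
  have cardC : forall w, w \in ~: (A :|: E) -> #|~: (A :|: E) :\ w| = k.
    by move=> w Hw; move: Hk; rewrite (cardsD1 w) Hw => -[].
  case: Hturn => Hturn.
  +
    case: (boolP [exists w, (w \in ~: (A :|: E)) && (w \notin J)]).
    * move/existsP => [w /andP [Hw HwJ]].
      have HwAE : w \notin A :|: E by move: Hw; rewrite inE.
      have HwA : w \notin A by move: HwAE; rewrite inE negb_or => /andP[].
      have HwE : w \notin E by move: HwAE; rewrite inE negb_or => /andP[].
      apply: (ewins_enforcer (v:=w)) => //.
      apply: IH.
      * rewrite -(cardC w Hw); apply: eq_card => u; rewrite !inE.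
        by case: (u == w); case: (u \in A); case: (u \in E).
      * apply/setP => u; rewrite !inE; case: eqP => [->|_]; first by rewrite (negbTE HwA).
        by move/setP: H0 => /(_ u); rewrite !inE.
      * by right; rewrite cardsU1 HwE /=; lia.
      * have -> : (w |: E) :&: J = E :&: J.
          by apply/setP => u; rewrite !inE; case: (eqVneq u w) => [->|_] /=; rewrite ?(negbTE HwJ) ?andbF.
        done.
    * rewrite negb_exists => /forallP Hall.
      have HvJ : v \in J by have := Hall v; rewrite Hv /= negbK.
      have Hout : #|A :\: J| + #|E :\: J| = 2 * m - 4.
        rewrite -cardU0; last first.
          apply/setP => u; rewrite !inE; have := Hdis u.
          by case: (u \in A); case: (u \in E); case: (u \in J).
        have -> : A :\: J :|: E :\: J = ~: J.
          apply/setP => u; rewrite !inE; have := Hall u; rewrite !inE.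
          by case: (u \in A); case: (u \in E); case: (u \in J).
        by have := cardsC J; rewrite HJ HT; lia.
      have := cardsID J A; have := cardsID J E => h1 h2.
      apply: (ewins_enforcer (v:=v)) => //.
      apply: IH.
      * rewrite -(cardC v Hv); apply: eq_card => u; rewrite !inE.
        by case: (u == v); case: (u \in A); case: (u \in E).
      * apply/setP => u; rewrite !inE; case: eqP => [->|_]; first by rewrite (negbTE HvA).
        by move/setP: H0 => /(_ u); rewrite !inE.
      * by right; rewrite cardsU1 HvE /=; lia.
      * have -> : (v |: E) :&: J = v |: (E :&: J).
          by apply/setP => u; rewrite !inE; case: eqP => [->|]; rewrite ?HvJ.
        rewrite cardsU1 inE (negbTE HvE) /=.
        lia.
  +
    apply: ewins_avoider; first by lia.
      by exists v.
    move=> w HwAE.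
    have Hw : w \in ~: (A :|: E) by rewrite inE.
    have HwA : w \notin A by move: HwAE; rewrite inE negb_or => /andP[].
    have HwE : w \notin E by move: HwAE; rewrite inE negb_or => /andP[].
    apply: IH.
    * rewrite -(cardC w Hw); apply: eq_card => u; rewrite !inE.
      by case: (u == w); case: (u \in A); case: (u \in E).
    * apply/setP => u; rewrite !inE; case: eqP => [->|_]; first by rewrite (negbTE HwE) andbF.
      by move/setP: H0 => /(_ u); rewrite !inE.
    * by left; rewrite cardsU1 HwA /=; lia.
    * apply: leq_trans Hd _; apply: subset_leq_card; apply: setSI; exact: subsetUr.
Qed.
End Key.
Section S.
Variable T : eqType.
Lemma mem_flat (s : seq (T * T)) x :
  (x \in flatten [seq [:: r.1; r.2] | r <- s]) = (x \in map fst s) || (x \in map snd s).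
Proof.
elim: s => [|r s IH] //=; rewrite !inE IH.
by case: (x == r.1); case: (x == r.2); case: (x \in map fst s).
Qed.

Lemma uniq_flat (s : seq (T * T)) : uniq (flatten [seq [:: r.1; r.2] | r <- s]) ->
  [/\ uniq (map fst s), uniq (map snd s) & forall x, x \in map fst s -> x \notin map snd s].
Proof.
elim: s => [|r s IH] //= /andP [H1 /andP [H2 /IH [u1 u2 d]]].
move: H1 H2; rewrite !inE !mem_flat !negb_or => /andP [n12 /andP [n1a n1b]] /andP [n2a n2b].
split.
- by rewrite n1a.
- by rewrite n2b.
- move=> x; rewrite !inE => /orP [/eqP ->|hx].
  + by rewrite negb_or n12 n1b.
  + rewrite negb_or (d x hx) andbT; apply/negP => /eqP E; subst x.
    by rewrite hx in n2a.
Qed.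
End S.

Lemma card_seq_set (T : finType) (s : seq T) (J : {set T}) : uniq s ->
  #|[set v | v \in s] :&: J| = count (mem J) s.
Proof.
move=> u.
have -> : [set v | v \in s] :&: J = [set v | v \in filter (mem J) s].
  by apply/setP => v; rewrite !inE mem_filter andbC.
rewrite cardsE; move/card_uniqP: (filter_uniq (mem J) u) => ->.
by rewrite size_filter.
Qed.

Theorem lemma3 (n : nat) (phi : seq (clause n)) (Hphi : wf_formula phi)
  (p : seq (vertex n * vertex n)) (e a : vertex n) (i : 'I_n) :
  uniq (flatten [seq [:: r.1; r.2] | r <- p] ++ [:: e; a]) ->
  (forall r, r \in p -> box_of r.1 = box_of r.2) ->
  e \in box i ->
  a \notin box i ->
  ewins (game_family phi)
    [set v | v \in [seq r.2 | r <- p] ++ [:: a]]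
    [set v | v \in [seq r.1 | r <- p] ++ [:: e]].
Proof.
move=> Hu Hbox He Ha.
set q := p ++ [:: (e, a)].
have Hq : uniq (flatten [seq [:: r.1; r.2] | r <- q]).
  by rewrite /q map_cat flatten_cat /=.
have -> : [seq r.2 | r <- p] ++ [:: a] = map snd q by rewrite /q map_cat.
have -> : [seq r.1 | r <- p] ++ [:: e] = map fst q by rewrite /q map_cat.
have [u1 u2 d] := @uniq_flat _ _ Hq.
set j := a.1.
have HT : #|{: 'I_n * 'I_4}| = 2 * (2 * n) by rewrite card_prod !card_ord; lia.
have HJ : #|box j| = 4.
  have -> : box j = setX [set j] [set: 'I_4].
    by apply/setP => v; rewrite !inE andbT.
  by rewrite cardsX cards1 cardsT card_ord.
have HF : forall S : {set vertex n}, S \subset box j -> #|S| = 3 -> S \in game_family phi.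
  move=> S HS H3; rewrite inE; apply/orP; left; apply/existsP; exists j.
  by rewrite HS H3 eqxx.
apply: (@key _ _ _ _ HT HJ HF #|~: ([set v | v \in map snd q] :|: [set v | v \in map fst q])|) => //.
- apply/setP => v; rewrite !inE; apply/negbTE; apply/negP => /andP [h1 h2].
  by have := d v h2; rewrite h1.
- left; rewrite !cardsE; move/card_uniqP: u1 => ->; move/card_uniqP: u2 => ->.
  by rewrite !size_map.
- rewrite !card_seq_set // !count_map /q !count_cat /=.
  have -> : count (preim fst (mem (box j))) p = count (preim snd (mem (box j))) p.
    apply: eq_in_count => r /Hbox; rewrite /box_of /= !inE => ->.
    done.
  have Hej : e \notin box j.
    move: He Ha; rewrite !inE /j => /eqP ->.
    by rewrite eq_sym.
  rewrite (negbTE Hej).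
  have -> : a \in box j by rewrite inE.
  by rewrite /= ltn_add2l.
Qed.
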